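(* Every equilibrium of system $(\ast\ast)$ in the open cube $(0,1)^3$ (i.e. every point $(x^*,y^*,\tfrac12)\in(0,1)^3$ with $(1+\theta_1)x^*+(1+\theta_2)y^*=2$) is neutrally stable: it is Lyapunov stable but not asymptotically stable.
   Context: Modified Prisoner's Dilemma system. Fix constants $\delta_{PS_1}=P_1-S_1>0$, $\delta_{TR_1}=T_1-R_1>0$, $\delta_{PS_2}=P_2-S_2>0$, $\delta_{TR_2}=T_2-R_2>0$ and $\theta_1,\theta_2>0$. Put $\phi_1(y)=\delta_{PS_1}+(\delta_{TR_1}-\delta_{PS_1})y$ and $\phi_2(x)=\delta_{PS_2}+(\delta_{TR_2}-\delta_{PS_2})x$. System $(\ast\ast)$ on $[0,1]^3$ is $\dot x = x(1-x)\phi_1(y)(1-2r)$, $\dot y = y(1-y)\phi_2(x)(1-2r)$, $\dot r = r(1-r)[(1+\theta_1)x+(1+\theta_2)y-2]$. *)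

(* Defs.v *)
From Stdlib Require Import Reals Lra.
Open Scope R_scope.

Definition vfield := R -> R -> R -> R * R * R.

Definition phi1 (dPS1 dTR1 y : R) : R := dPS1 + (dTR1 - dPS1) * y.
Definition phi2 (dPS2 dTR2 x : R) : R := dPS2 + (dTR2 - dPS2) * x.

Definition PD_field (dPS1 dTR1 dPS2 dTR2 th1 th2 : R) : vfield :=
  fun x y r =>
    ( x * (1 - x) * phi1 dPS1 dTR1 y * (1 - 2 * r),
      y * (1 - y) * phi2 dPS2 dTR2 x * (1 - 2 * r),
      r * (1 - r) * ((1 + th1) * x + (1 + th2) * y - 2) ).

Definition dist3 (a b : R * R * R) : R :=
  let '(a1, a2, a3) := a in
  let '(b1, b2, b3) := b in
  sqrt ((a1 - b1) ^ 2 + (a2 - b2) ^ 2 + (a3 - b3) ^ 2).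

Definition right_cont0 (g : R -> R) : Prop :=
  forall eps, eps > 0 -> exists d, d > 0 /\
    forall t, 0 <= t < d -> Rabs (g t - g 0) < eps.

Definition ode_at (F : vfield) (x y r : R -> R) (t : R) : Prop :=
  derivable_pt_lim x t (fst (fst (F (x t) (y t) (r t)))) /\
  derivable_pt_lim y t (snd (fst (F (x t) (y t) (r t)))) /\
  derivable_pt_lim r t (snd (F (x t) (y t) (r t))).

Definition is_sol_on (F : vfield) (T : R) (x y r : R -> R) : Prop :=
  (forall t, 0 < t < T -> ode_at F x y r t) /\
  right_cont0 x /\ right_cont0 y /\ right_cont0 r.

Definition is_global_sol (F : vfield) (x y r : R -> R) : Prop :=
  (forall t, 0 < t -> ode_at F x y r t) /\
  right_cont0 x /\ right_cont0 y /\ right_cont0 r.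

Definition lyapunov_stable (F : vfield) (p : R * R * R) : Prop :=
  forall eps, eps > 0 -> exists del, del > 0 /\
    forall (T : R) (x y r : R -> R), is_sol_on F T x y r ->
      dist3 (x 0, y 0, r 0) p < del ->
      forall t, 0 <= t < T -> dist3 (x t, y t, r t) p < eps.

Definition attractive (F : vfield) (p : R * R * R) : Prop :=
  exists eta, eta > 0 /\
    forall (x y r : R -> R), is_global_sol F x y r ->
      dist3 (x 0, y 0, r 0) p < eta ->
      forall eps, eps > 0 -> exists T0, forall t, t >= T0 ->
        dist3 (x t, y t, r t) p < eps.

Definition asymptotically_stable (F : vfield) (p : R * R * R) : Prop :=
  lyapunov_stable F p /\ attractive F p.

Definition neutrally_stable (F : vfield) (p : R * R * R) : Prop :=
  lyapunov_stable F p /\ ~ asymptotically_stable F p.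

(* Main.v *)
Require Import Defs.
From Stdlib Require Import Reals.
Open Scope R_scope.
From Stdlib Require Import Lra Psatz Ranalysis5 ClassicalEpsilon Classical.
From Coquelicot Require Import Coquelicot.
Open Scope R_scope.
Lemma ln_le_sub1 z : 0 < z -> ln z <= z - 1.
Proof. intros Hz. pose proof (exp_ineq1_le (ln z)). rewrite exp_ln in H; lra. Qed.

Lemma ln_diff_lo a b : 0 < a -> 0 < b -> (a - b) / a <= ln a - ln b.
Proof.
  intros Ha Hb. pose proof (ln_le_sub1 (b/a)) as H.
  rewrite ln_div in H by lra.
  assert (H1: 0 < b/a) by (apply Rdiv_lt_0_compat; lra).
  specialize (H H1).
  replace ((a-b)/a) with (1 - b/a) by (field; lra). lra.
Qed.

Lemma ln_diff_hi a b : 0 < a -> 0 < b -> ln a - ln b <= (a - b) / b.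
Proof.
  intros Ha Hb. pose proof (ln_le_sub1 (a/b)) as H.
  rewrite ln_div in H by lra.
  assert (H1: 0 < a/b) by (apply Rdiv_lt_0_compat; lra).
  specialize (H H1).
  replace ((a-b)/b) with (a/b - 1) by (field; lra). lra.
Qed.

Definition Pg (A B z : R) := A * ln z - B * ln (1 - z).

Lemma Pg_lo A B u v : 0 < A -> 0 < B -> 0 < u -> u <= v -> v < 1 ->
  (A + B) * (v - u) <= Pg A B v - Pg A B u.
Proof.
  intros HA HB Hu Huv Hv. unfold Pg.
  pose proof (ln_diff_lo v u ltac:(lra) ltac:(lra)) as H1.
  pose proof (ln_diff_lo (1-u) (1-v) ltac:(lra) ltac:(lra)) as H2.
  assert (E1 : v - u <= (v-u)/v).
  { apply Rmult_le_reg_r with v; [lra|]. field_simplify; nra. }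
  assert (E2 : v - u <= (1-u - (1-v))/(1-u)).
  { apply Rmult_le_reg_r with (1-u); [lra|]. field_simplify; nra. }
  nra.
Qed.

Lemma Pg_hi A B d u v : 0 < A -> 0 < B -> 0 < d -> d <= u -> u <= v -> v <= 1 - d ->
  Pg A B v - Pg A B u <= (A + B) * (v - u) / d.
Proof.
  intros HA HB Hd Hu Huv Hv. unfold Pg.
  pose proof (ln_diff_hi v u ltac:(lra) ltac:(lra)) as H1.
  pose proof (ln_diff_hi (1-u) (1-v) ltac:(lra) ltac:(lra)) as H2.
  assert (E1 : (v-u)/u <= (v - u)/d).
  { unfold Rdiv. apply Rmult_le_compat_l; [lra|]. apply Rinv_le_contravar; lra. }
  assert (E2 : (1-u - (1-v))/(1-v) <= (v-u)/d).
  { unfold Rdiv. replace (1-u-(1-v)) with (v-u) by ring.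
    apply Rmult_le_compat_l; [lra|]. apply Rinv_le_contravar; lra. }
  assert (E3 : (A+B)*(v-u)/d = A * ((v-u)/d) + B*((v-u)/d)) by (field; lra).
  rewrite E3. nra.
Qed.

Lemma Pg_derive A B z : 0 < z < 1 -> is_derive (Pg A B) z (A / z + B / (1 - z)).
Proof.
  intros Hz. unfold Pg. auto_derive.
  - split; [lra|]. split; [lra|]. auto.
  - field; lra.
Qed.

Lemma Pg_cont A B z : 0 < z < 1 -> continuity_pt (Pg A B) z.
Proof.
  intros Hz. apply derivable_continuous_pt. exists (A / z + B / (1 - z)).
  apply is_derive_Reals. apply Pg_derive; auto.
Qed.
Definition Qinv (P : R -> R) (al be v : R) : R :=
  epsilon (inhabits al) (fun y => al <= y <= be /\ (P al < v < P be -> P y = v)).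

Section Inv.
Variables (P : R -> R) (al be : R).
Hypothesis Hab : al < be.
Hypothesis Pc : forall z, al <= z <= be -> continuity_pt P z.
Hypothesis Pm : forall u v, al <= u -> u < v -> v <= be -> P u < P v.

Lemma Qinv_spec v : P al < v < P be -> al <= Qinv P al be v <= be /\ P (Qinv P al be v) = v.
Proof.
  intros Hv. unfold Qinv.
  assert (Ex : exists y, al <= y <= be /\ (P al < v < P be -> P y = v)).
  { destruct (IVT_interv (fun z => P z - v) al be) as [z [Hz1 Hz2]].
    - intros a Ha. apply continuity_pt_minus; [apply Pc; auto| apply continuity_pt_const; intros ? ?; auto].
    - auto.
    - lra.
    - lra.
    - exists z. split; auto. intros _. lra. }
  pose proof (epsilon_spec (inhabits al) _ Ex) as [H1 H2]. split; auto.
Qed.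

Lemma Pm_le u v : al <= u -> u <= v -> v <= be -> P u <= P v.
Proof. intros. destruct (Req_dec u v); [subst; lra|]. left; apply Pm; lra. Qed.

Lemma Qinv_P y : al < y < be -> Qinv P al be (P y) = y.
Proof.
  intros Hy.
  assert (H1 : P al < P y) by (apply Pm; lra).
  assert (H2 : P y < P be) by (apply Pm; lra).
  destruct (Qinv_spec (P y)) as [[Hq1 Hq2] Hq3]; [lra|].
  set (q := Qinv P al be (P y)) in *.
  destruct (Rtotal_order q y) as [Hl|[He|Hg]]; auto.
  - pose proof (Pm q y ltac:(lra) Hl ltac:(lra)). lra.
  - pose proof (Pm y q ltac:(lra) Hg ltac:(lra)). lra.
Qed.

Lemma Qinv_cont v : P al < v < P be -> continuity_pt (Qinv P al be) v.
Proof.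
  intros Hv.
  destruct (Qinv_spec v Hv) as [[Hq1 Hq2] Hq3].
  set (y0 := Qinv P al be v) in *.
  assert (Hy1 : al < y0).
  { destruct (Req_dec al y0); [|lra]. rewrite <- H in Hq3. lra. }
  assert (Hy2 : y0 < be).
  { destruct (Req_dec be y0); [|lra]. rewrite <- H in Hq3. lra. }
  intros eps Heps.
  set (e' := Rmin eps (Rmin (y0 - al) (be - y0)) / 2).
  assert (He'1 : 0 < e').
  { unfold e'. apply Rdiv_lt_0_compat; [|lra]. apply Rmin_glb_lt; [lra|]. apply Rmin_glb_lt; lra. }
  assert (He'2 : e' < eps).
  { unfold e'. pose proof (Rmin_l eps (Rmin (y0 - al) (be - y0))). lra. }
  assert (He'3 : e' < y0 - al /\ e' < be - y0).
  { unfold e'. pose proof (Rmin_r eps (Rmin (y0 - al) (be - y0))).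
    pose proof (Rmin_l (y0 - al) (be - y0)). pose proof (Rmin_r (y0 - al) (be - y0)).
    split; lra. }
  assert (Hp1 : P (y0 - e') < v) by (rewrite <- Hq3; apply Pm; lra).
  assert (Hp2 : v < P (y0 + e')) by (rewrite <- Hq3; apply Pm; lra).
  exists (Rmin (P (y0 + e') - v) (v - P (y0 - e'))).
  split. { apply Rmin_glb_lt; lra. }
  intros x [_ Hx]. simpl in Hx. unfold R_dist in *.
  pose proof (Rmin_l (P (y0 + e') - v) (v - P (y0 - e'))).
  pose proof (Rmin_r (P (y0 + e') - v) (v - P (y0 - e'))).
  assert (Hx1 : P (y0 - e') < x /\ x < P (y0 + e')).
  { apply Rabs_def2 in Hx. lra. }
  assert (Hal : P al <= P (y0 - e')) by (apply Pm_le; lra).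
  assert (Hbe : P (y0 + e') <= P be) by (apply Pm_le; lra).
  destruct (Qinv_spec x ltac:(lra)) as [[Hz1 Hz2] Hz3].
  set (z := Qinv P al be x) in *.
  assert (z < y0 + e').
  { destruct (Rlt_le_dec z (y0 + e')); auto.
    pose proof (Pm_le (y0 + e') z ltac:(lra) r ltac:(lra)). lra. }
  assert (y0 - e' < z).
  { destruct (Rlt_le_dec (y0 - e') z); auto.
    pose proof (Pm_le z (y0 - e') ltac:(lra) r ltac:(lra)). lra. }
  simpl; unfold R_dist; fold y0; apply Rabs_def1; lra.
Qed.
End Inv.
Lemma cpt_eps f a : continuity_pt f a -> forall eps, eps > 0 ->
  exists d, d > 0 /\ forall u, Rabs (u - a) < d -> Rabs (f u - f a) < eps.
Proof.
  intros Hc eps He. destruct (Hc eps He) as [d [Hd H]].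
  exists d. split; auto. intros u Hu.
  destruct (Req_dec u a) as [->|Hne].
  - rewrite Rminus_diag, Rabs_R0. lra.
  - apply (H u). split; [split; [exact I| auto]|]. exact Hu.
Qed.

Lemma rc_comp (g : R -> R) (x : R -> R) : continuity_pt g (x 0) -> right_cont0 x ->
  right_cont0 (fun t => g (x t)).
Proof.
  intros Hg Hx eps He. destruct (cpt_eps g (x 0) Hg eps He) as [d [Hd H]].
  destruct (Hx d Hd) as [d' [Hd' H']]. exists d'. split; [auto|].
  intros t Ht. apply H. apply H'. auto.
Qed.

Lemma cont_induction (T c : R) (f : R -> R) :
  (forall t, 0 < t < T -> continuity_pt f t) -> right_cont0 f -> f 0 < c ->
  (forall tau, 0 <= tau < T -> (forall s, 0 <= s <= tau -> f s <= c) -> f tau < c) ->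
  forall t, 0 <= t < T -> f t < c.
Proof.
  intros Hc Hr H0 Hstep t0 Ht0.
  destruct (Rlt_le_dec (f t0) c) as [|Hbad]; auto. exfalso.
  set (E := fun s => 0 <= s <= t0 /\ forall u, 0 <= u <= s -> f u < c).
  assert (HE0 : E 0).
  { split; [lra|]. intros u Hu. replace u with 0 by lra. auto. }
  assert (Hb : bound E). { exists t0. intros s [Hs _]. lra. }
  destruct (completeness E Hb (ex_intro _ 0 HE0)) as [sg [Hub Hlub]].
  assert (Hsg0 : 0 <= sg) by (apply Hub; auto).
  assert (Hsg1 : sg <= t0) by (apply Hlub; intros s [Hs _]; lra).
  assert (C1 : forall u, 0 <= u < sg -> f u < c).
  { intros u Hu. apply NNPP. intros Hn.
    assert (sg <= u).
    { apply Hlub. intros s [Hs Hs2]. destruct (Rle_lt_dec s u); auto.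
      exfalso. apply Hn. apply Hs2. lra. }
    lra. }
  assert (C2 : f sg <= c).
  { destruct (Req_dec sg 0) as [Hz|Hz]. { rewrite Hz. lra. }
    destruct (Rle_lt_dec (f sg) c); auto. exfalso.
    destruct (cpt_eps f sg (Hc sg ltac:(lra)) (f sg - c) ltac:(lra)) as [d [Hd Hf]].
    set (u := Rmax 0 (sg - d/2)).
    assert (Hu1 : 0 <= u) by apply Rmax_l.
    assert (Hu2 : u < sg).
    { unfold u. apply Rmax_lub_lt; lra. }
    assert (Hu3 : sg - d/2 <= u) by apply Rmax_r.
    specialize (Hf u ltac:(apply Rabs_def1; lra)).
    specialize (C1 u ltac:(lra)). apply Rabs_def2 in Hf. lra. }
  assert (C3 : f sg < c).
  { apply Hstep; [lra|]. intros s Hs. destruct (Req_dec s sg) as [->|]; auto.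
    left; apply C1; lra. }
  assert (C4 : exists d, d > 0 /\ forall u, sg <= u < sg + d -> f u < c).
  { destruct (Req_dec sg 0) as [Hz|Hz].
    - destruct (Hr (c - f 0) ltac:(lra)) as [d [Hd Hf]]. exists d. split; auto.
      intros u Hu. specialize (Hf u ltac:(lra)). apply Rabs_def2 in Hf. lra.
    - destruct (cpt_eps f sg (Hc sg ltac:(lra)) (c - f sg) ltac:(lra)) as [d [Hd Hf]].
      exists d. split; auto. intros u Hu.
      specialize (Hf u ltac:(apply Rabs_def1; lra)). apply Rabs_def2 in Hf. lra. }
  destruct C4 as [d [Hd C4]].
  destruct (Rlt_le_dec t0 (sg + d)) as [Hl|Hl].
  - specialize (C4 t0 ltac:(lra)). lra.
  - assert (E (sg + d/2)).
    { split; [lra|]. intros u Hu. destruct (Rlt_le_dec u sg).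
      - apply C1; lra.
      - apply C4; lra. }
    specialize (Hub _ H). lra.
Qed.

Lemma const_deriv0 (f : R -> R) (tau : R) :
  0 <= tau ->
  (forall t, 0 < t <= tau -> is_derive f t 0) -> right_cont0 f -> f tau = f 0.
Proof.
  intros Htau Hd Hr.
  destruct (Req_dec tau 0) as [->|Hz]; auto.
  assert (Hu : forall u, 0 < u < tau -> f u = f tau).
  { intros u Hu. destruct (MVT_gen f u tau (fun _ => 0)) as [cc [Hc Hm]].
    - intros x Hx. rewrite Rmin_left in Hx by lra. rewrite Rmax_right in Hx by lra.
      apply Hd. lra.
    - intros x Hx. rewrite Rmin_left in Hx by lra. rewrite Rmax_right in Hx by lra.
      apply derivable_continuous_pt. exists 0. apply is_derive_Reals. apply Hd. lra.
    - lra. }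
  apply NNPP. intros Hne.
  destruct (Hr (Rabs (f tau - f 0)) ltac:(apply Rabs_pos_lt; lra)) as [d [Hd' Hf]].
  set (u := Rmin (d/2) (tau/2)).
  assert (0 < u) by (unfold u; apply Rmin_glb_lt; lra).
  assert (u <= d/2) by apply Rmin_l. assert (u <= tau/2) by apply Rmin_r.
  specialize (Hf u ltac:(lra)). rewrite Hu in Hf by lra. lra.
Qed.
Section Main.
Variables a1 b1 a2 b2 th1 th2 xs ys : R.
Hypotheses (Ha1 : a1 > 0) (Hb1 : b1 > 0) (Ha2 : a2 > 0) (Hb2 : b2 > 0) (Ht1 : th1 > 0) (Ht2 : th2 > 0)
  (Hxs : 0 < xs < 1) (Hys : 0 < ys < 1) (Heq : (1 + th1) * xs + (1 + th2) * ys = 2).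

Let c1 := 1 + th1.
Let c2 := 1 + th2.
Definition gg x y := c1 * x + c2 * y - 2.
Let P1 := Pg a1 b1.
Let P2 := Pg a2 b2.
Definition HH x y := P2 x - P1 y.
Definition d0 := Rmin (Rmin xs (1-xs)) (Rmin ys (1-ys)) / 2.
Let m1 := a1 + b1.
Let m2 := a2 + b2.
Let L1 := m1 / d0.
Let L2 := m2 / d0.
Definition Q1 := Qinv P1 (ys - d0) (ys + d0).
Definition ee := Rmin (d0/2) (m1 * d0 / (4 * L2)).
Definition eta := Rmin (m2 * ee) (m1 * d0 / 4).
Definition hs := HH xs ys.
Definition Yh h z := Q1 (P2 z - h).
Definition Gh h z := gg z (Yh h z).
Definition Fh h z := Gh h z / (z * (1 - z) * phi1 a1 b1 (Yh h z)).

Lemma d0_facts : 0 < d0 /\ d0 <= xs/2 /\ d0 <= (1-xs)/2 /\ d0 <= ys/2 /\ d0 <= (1-ys)/2.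
Proof.
  unfold d0.
  pose proof (Rmin_l (Rmin xs (1-xs)) (Rmin ys (1-ys))).
  pose proof (Rmin_r (Rmin xs (1-xs)) (Rmin ys (1-ys))).
  pose proof (Rmin_l xs (1-xs)). pose proof (Rmin_r xs (1-xs)).
  pose proof (Rmin_l ys (1-ys)). pose proof (Rmin_r ys (1-ys)).
  assert (0 < Rmin (Rmin xs (1-xs)) (Rmin ys (1-ys))).
  { apply Rmin_glb_lt; apply Rmin_glb_lt; lra. }
  repeat split; lra.
Qed.

Lemma ee_facts : 0 < ee /\ ee <= d0/2 /\ 2 * ee * L2 <= m1 * d0 / 2.
Proof.
  destruct d0_facts as [Hd _].
  assert (HL2 : 0 < L2) by (unfold L2, m2; apply Rdiv_lt_0_compat; lra).
  unfold ee. pose proof (Rmin_l (d0/2) (m1 * d0 / (4 * L2))).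
  pose proof (Rmin_r (d0/2) (m1 * d0 / (4 * L2))).
  assert (0 < m1 * d0 / (4 * L2)) by (unfold m1; apply Rdiv_lt_0_compat; nra).
  repeat split.
  - apply Rmin_glb_lt; lra.
  - lra.
  - set (r := Rmin (d0 / 2) (m1 * d0 / (4 * L2))) in *.
    assert (r * L2 <= m1 * d0 / (4 * L2) * L2) by (apply Rmult_le_compat_r; lra).
    replace (m1 * d0 / (4 * L2) * L2) with (m1 * d0 / 4) in H2 by (field; lra). lra.
Qed.

Lemma eta_facts : 0 < eta /\ eta <= m2 * ee /\ eta <= m1 * d0 / 4.
Proof.
  destruct d0_facts as [Hd _]. destruct ee_facts as [He _].
  unfold eta. pose proof (Rmin_l (m2 * ee) (m1 * d0 / 4)).
  pose proof (Rmin_r (m2 * ee) (m1 * d0 / 4)).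
  repeat split; try lra. apply Rmin_glb_lt; unfold m1, m2; nra.
Qed.

Lemma P1_mono u v : ys - d0 <= u -> u < v -> v <= ys + d0 -> P1 u < P1 v.
Proof.
  intros. destruct d0_facts as [Hd [_ [_ [Hy1 Hy2]]]].
  pose proof (Pg_lo a1 b1 u v Ha1 Hb1 ltac:(lra) ltac:(lra) ltac:(lra)). unfold P1. nra.
Qed.

Lemma P1_cont z : ys - d0 <= z <= ys + d0 -> continuity_pt P1 z.
Proof. intros. destruct d0_facts as [Hd [_ [_ [Hy1 Hy2]]]]. apply Pg_cont. lra. Qed.

Lemma x_range z : Rabs (z - xs) < 2 * ee -> d0 <= z <= 1 - d0.
Proof.
  intros Hz. destruct d0_facts as [Hd [Hx1 [Hx2 _]]]. destruct ee_facts as [He [He2 _]].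
  apply Rabs_def2 in Hz. lra.
Qed.

Lemma P2_lip u v : d0 <= u -> u <= v -> v <= 1 - d0 -> m2 * (v - u) <= P2 v - P2 u <= L2 * (v - u).
Proof.
  intros. destruct d0_facts as [Hd _]. split.
  - apply Pg_lo; auto; lra.
  - unfold L2. replace (m2/d0*(v-u)) with (m2*(v-u)/d0) by (field; lra). apply Pg_hi; auto.
Qed.

Lemma P1_lip u v : d0 <= u -> u <= v -> v <= 1 - d0 -> m1 * (v - u) <= P1 v - P1 u <= L1 * (v - u).
Proof.
  intros. destruct d0_facts as [Hd _]. split.
  - apply Pg_lo; auto; lra.
  - unfold L1. replace (m1/d0*(v-u)) with (m1*(v-u)/d0) by (field; lra). apply Pg_hi; auto.
Qed.

Lemma P2_abs u v : d0 <= u <= 1 - d0 -> d0 <= v <= 1 - d0 -> Rabs (P2 v - P2 u) <= L2 * Rabs (v - u).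
Proof.
  intros Hu Hv. destruct (Rle_dec u v).
  - pose proof (P2_lip u v ltac:(lra) r ltac:(lra)). assert (0 < m2 /\ 0 < m1) by (unfold m1, m2; lra). rewrite (Rabs_right (_ v - _ u)) by nra; rewrite (Rabs_right (v-u)) by lra; lra.
  - pose proof (P2_lip v u ltac:(lra) ltac:(lra) ltac:(lra)). assert (0 < m2 /\ 0 < m1) by (unfold m1, m2; lra). rewrite (Rabs_left1 (_ v - _ u)) by nra; rewrite (Rabs_left1 (v-u)) by lra; lra.
Qed.

Lemma P1_abs u v : d0 <= u <= 1 - d0 -> d0 <= v <= 1 - d0 -> Rabs (P1 v - P1 u) <= L1 * Rabs (v - u).
Proof.
  intros Hu Hv. destruct (Rle_dec u v).
  - pose proof (P1_lip u v ltac:(lra) r ltac:(lra)). assert (0 < m2 /\ 0 < m1) by (unfold m1, m2; lra). rewrite (Rabs_right (_ v - _ u)) by nra; rewrite (Rabs_right (v-u)) by lra; lra.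
  - pose proof (P1_lip v u ltac:(lra) ltac:(lra) ltac:(lra)). assert (0 < m2 /\ 0 < m1) by (unfold m1, m2; lra). rewrite (Rabs_left1 (_ v - _ u)) by nra; rewrite (Rabs_left1 (v-u)) by lra; lra.
Qed.

Lemma dom_lemma h z : Rabs (h - hs) <= eta -> Rabs (z - xs) < 2 * ee ->
  P1 (ys - d0) < P2 z - h < P1 (ys + d0).
Proof.
  intros Hh Hz. destruct d0_facts as [Hd [Hx1 [Hx2 [Hy1 Hy2]]]].
  destruct ee_facts as [He [He2 He3]]. destruct eta_facts as [Het [Het2 Het3]].
  pose proof (x_range z Hz) as Hzr.
  pose proof (P2_abs xs z ltac:(lra) Hzr) as Hp.
  assert (HL2 : 0 < L2) by (unfold L2, m2; apply Rdiv_lt_0_compat; lra).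
  assert (Hp' : Rabs (P2 z - P2 xs) < m1 * d0 / 2).
  { assert (L2 * Rabs (z - xs) < L2 * (2 * ee)) by (apply Rmult_lt_compat_l; lra). lra. }
  pose proof (P1_lip (ys - d0) ys ltac:(lra) ltac:(lra) ltac:(lra)) as [Hq1 _].
  pose proof (P1_lip ys (ys + d0) ltac:(lra) ltac:(lra) ltac:(lra)) as [Hq2 _].
  unfold hs, HH in Hh. fold P1 P2 in Hh.
  apply Rabs_def2 in Hp'. apply Rabs_le_between in Hh. unfold m1 in *. lra.
Qed.

Lemma Y_spec h z : Rabs (h - hs) <= eta -> Rabs (z - xs) < 2 * ee ->
  ys - d0 <= Yh h z <= ys + d0 /\ P1 (Yh h z) = P2 z - h.
Proof.
  intros Hh Hz. destruct d0_facts as [Hd _]. unfold Yh, Q1.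
  apply Qinv_spec. all: first [lra | apply P1_cont | apply P1_mono | (apply dom_lemma; auto) | auto].
Qed.

Lemma Y_eq h z y : Rabs (h - hs) <= eta -> Rabs (z - xs) < 2 * ee ->
  ys - d0 < y < ys + d0 -> P1 y = P2 z - h -> Yh h z = y.
Proof.
  intros Hh Hz Hy Hp. destruct d0_facts as [Hd _]. unfold Yh, Q1. rewrite <- Hp.
  apply Qinv_P. all: first [lra | apply P1_cont | apply P1_mono | auto].
Qed.

Lemma Y_range h z : Rabs (h - hs) <= eta -> Rabs (z - xs) < 2 * ee -> d0 <= Yh h z <= 1 - d0.
Proof.
  intros Hh Hz. destruct (Y_spec h z Hh Hz) as [H1 _]. destruct d0_facts as [Hd [_ [_ [Hy1 Hy2]]]]. lra.
Qed.

Lemma Y_lip h z1 z2 : Rabs (h - hs) <= eta -> Rabs (z1 - xs) < 2 * ee -> Rabs (z2 - xs) < 2 * ee ->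
  z1 <= z2 -> 0 <= Yh h z2 - Yh h z1 <= (L2 / m1) * (z2 - z1).
Proof.
  intros Hh Hz1 Hz2 Hle.
  destruct (Y_spec h z1 Hh Hz1) as [_ E1]. destruct (Y_spec h z2 Hh Hz2) as [_ E2].
  pose proof (Y_range h z1 Hh Hz1). pose proof (Y_range h z2 Hh Hz2).
  pose proof (x_range z1 Hz1). pose proof (x_range z2 Hz2).
  pose proof (P2_lip z1 z2 ltac:(lra) Hle ltac:(lra)) as [_ Hp].
  assert (Hm1 : 0 < m1) by (unfold m1; lra).
  assert (Y1 : Yh h z1 <= Yh h z2).
  { destruct (Rle_dec (Yh h z1) (Yh h z2)); auto.
    pose proof (P1_lip (Yh h z2) (Yh h z1) ltac:(lra) ltac:(lra) ltac:(lra)) as [Hq _].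
    pose proof (P2_lip z1 z2 ltac:(lra) Hle ltac:(lra)) as [Hq2 _].
    assert (0 < m2) by (unfold m2; lra).
    nra. }
  pose proof (P1_lip (Yh h z1) (Yh h z2) ltac:(lra) Y1 ltac:(lra)) as [Hq _].
  split; [lra|].
  apply Rmult_le_reg_l with m1; auto.
  replace (m1 * (L2 / m1 * (z2 - z1))) with (L2 * (z2 - z1)) by (field; lra). lra.
Qed.

Lemma Y_lip_prod h c z : Rabs (h - hs) <= eta -> Rabs (c - xs) < 2 * ee -> Rabs (z - xs) < 2 * ee ->
  0 <= (Yh h c - Yh h z) * (c - z) <= (L2 / m1) * (c - z) ^ 2.
Proof.
  intros Hh Hc Hz. destruct (Rle_dec z c).
  - pose proof (Y_lip h z c Hh Hz Hc r). split; nra.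
  - pose proof (Y_lip h c z Hh Hc Hz ltac:(lra)). split; nra.
Qed.

Lemma Y_cont h z : Rabs (h - hs) <= eta -> Rabs (z - xs) < 2 * ee -> continuity_pt (Yh h) z.
Proof.
  intros Hh Hz. destruct d0_facts as [Hd _].
  pose proof (x_range z Hz).
  unfold Yh. change (continuity_pt (comp Q1 (fun z => P2 z - h)) z).
  apply continuity_pt_comp.
  - apply continuity_pt_minus. apply Pg_cont. lra. apply continuity_pt_const. intros ? ?; auto.
  - unfold Q1. apply Qinv_cont. all: first [lra | apply P1_cont | apply P1_mono | (apply dom_lemma; auto) | auto].
Qed.

Lemma phi1_bounds y : 0 <= y <= 1 -> a1 * b1 / (a1 + b1) <= phi1 a1 b1 y <= a1 + b1.
Proof.
  intros Hy. unfold phi1. split.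
  - apply Rmult_le_reg_l with (a1 + b1); [lra|].
    replace ((a1 + b1) * (a1 * b1 / (a1 + b1))) with (a1 * b1) by (field; lra). nra.
  - nra.
Qed.

Lemma G_cont h z : Rabs (h - hs) <= eta -> Rabs (z - xs) < 2 * ee -> continuity_pt (Gh h) z.
Proof.
  intros Hh Hz. unfold Gh, gg.
  apply continuity_pt_minus; [|apply continuity_pt_const; intros ? ?; auto].
  apply continuity_pt_plus.
  - apply continuity_pt_scal. apply derivable_continuous_pt, derivable_pt_id.
  - apply (continuity_pt_scal (Yh h)). apply Y_cont; auto.
Qed.

Lemma F_cont h z : Rabs (h - hs) <= eta -> Rabs (z - xs) < 2 * ee -> continuity_pt (Fh h) z.
Proof.
  intros Hh Hz. pose proof (x_range z Hz). pose proof (Y_range h z Hh Hz).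
  destruct d0_facts as [Hd _].
  pose proof (phi1_bounds (Yh h z) ltac:(lra)) as [Hp _].
  assert (0 < a1 * b1 / (a1 + b1)) by (apply Rdiv_lt_0_compat; nra).
  unfold Fh. apply (continuity_pt_div (Gh h) (fun z => z * (1 - z) * phi1 a1 b1 (Yh h z))).
  - apply G_cont; auto.
  - apply continuity_pt_mult. apply continuity_pt_mult.
    + apply derivable_continuous_pt, derivable_pt_id.
    + apply continuity_pt_minus. apply continuity_pt_const; intros ? ?; auto.
      apply derivable_continuous_pt, derivable_pt_id.
    + unfold phi1. apply continuity_pt_plus. apply continuity_pt_const; intros ? ?; auto.
      apply (continuity_pt_scal (Yh h)). apply Y_cont; auto.
  - assert (0 < z * (1 - z)) by nra. apply Rgt_not_eq. simpl. nra.
Qed.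

Lemma xe_exists h : Rabs (h - hs) <= eta ->
  exists xe, xs - ee <= xe <= xs + ee /\ Gh h xe = 0.
Proof.
  intros Hh. destruct ee_facts as [He [He2 He3]]. destruct eta_facts as [Het [Het2 Het3]].
  destruct d0_facts as [Hd [Hx1 [Hx2 [Hy1 Hy2]]]].
  assert (Hm1 : 0 < m1) by (unfold m1; lra).
  assert (U1 : Rabs (xs + ee - xs) < 2 * ee) by (rewrite Rabs_right; lra).
  assert (U2 : Rabs (xs - ee - xs) < 2 * ee) by (rewrite Rabs_left1; lra).
  apply Rabs_le_between in Hh. unfold hs, HH in Hh. fold P1 P2 in Hh.
  destruct (IVT_interv (Gh h) (xs - ee) (xs + ee)) as [z [Hz1 Hz2]].
  - intros a Ha. apply G_cont. apply Rabs_le_between; fold P1 P2; unfold hs, HH; fold P1 P2; lra.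
    apply Rabs_def1; lra.
  - lra.
  - destruct (Y_spec h (xs - ee) ltac:(apply Rabs_le_between; unfold hs, HH; fold P1 P2; lra) U2) as [R1 E1].
    pose proof (P2_lip (xs - ee) xs ltac:(lra) ltac:(lra) ltac:(lra)) as [Hp _].
    set (Y := Yh h (xs - ee)) in *.
    assert (Y <= ys).
    { destruct (Rle_dec Y ys); auto.
      pose proof (P1_lip ys Y ltac:(lra) ltac:(lra) ltac:(lra)) as [Hq _]. exfalso. nra. }
    unfold Gh, gg. fold Y. unfold c1, c2. nra.
  - destruct (Y_spec h (xs + ee) ltac:(apply Rabs_le_between; unfold hs, HH; fold P1 P2; lra) U1) as [R1 E1].
    pose proof (P2_lip xs (xs + ee) ltac:(lra) ltac:(lra) ltac:(lra)) as [Hp _].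
    set (Y := Yh h (xs + ee)) in *.
    assert (ys <= Y).
    { destruct (Rle_dec ys Y); auto.
      pose proof (P1_lip Y ys ltac:(lra) ltac:(lra) ltac:(lra)) as [Hq _]. exfalso. nra. }
    unfold Gh, gg. fold Y. unfold c1, c2. nra.
  - exists z. auto.
Qed.

Definition Kmax := (a1 + b1) / 4.
Definition Kmin := d0 * d0 * (a1 * b1 / (a1 + b1)).
Definition cm := c1 / Kmax.
Definition CM := (c1 + c2 * (L2 / m1)) / Kmin.

Lemma G_bounds h xe c : Rabs (h - hs) <= eta -> Rabs (xe - xs) < 2 * ee -> Rabs (c - xs) < 2 * ee ->
  Gh h xe = 0 ->
  c1 * (c - xe) ^ 2 <= Gh h c * (c - xe) <= (c1 + c2 * (L2 / m1)) * (c - xe) ^ 2.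
Proof.
  intros Hh Hxe Hc HG.
  pose proof (Y_lip_prod h c xe Hh Hc Hxe) as [Y1 Y2].
  assert (E : Gh h c * (c - xe) = c1 * (c - xe) ^ 2 + c2 * ((Yh h c - Yh h xe) * (c - xe))).
  { unfold Gh, gg in *. replace (c1 * c + c2 * Yh h c - 2) with (c1*(c - xe) + c2*(Yh h c - Yh h xe)) by lra. ring. }
  rewrite E. assert (0 < c2) by (unfold c2; lra). split; nra.
Qed.

Lemma F_bounds h xe c : Rabs (h - hs) <= eta -> Rabs (xe - xs) < 2 * ee -> Rabs (c - xs) < 2 * ee ->
  Gh h xe = 0 ->
  cm * (c - xe) ^ 2 <= Fh h c * (c - xe) <= CM * (c - xe) ^ 2.
Proof.
  intros Hh Hxe Hc HG.
  pose proof (G_bounds h xe c Hh Hxe Hc HG) as [N1 N2].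
  pose proof (x_range c Hc). pose proof (Y_range h c Hh Hc).
  destruct d0_facts as [Hd _].
  pose proof (phi1_bounds (Yh h c) ltac:(lra)) as [Hp1 Hp2].
  set (K := c * (1 - c) * phi1 a1 b1 (Yh h c)).
  set (N := Gh h c * (c - xe)) in *.
  assert (Hmf : 0 < a1 * b1 / (a1 + b1)) by (apply Rdiv_lt_0_compat; nra).
  assert (Hcc1 : d0 * d0 <= c * (1 - c)) by nra.
  assert (Hcc2 : c * (1 - c) <= 1/4) by (pose proof (pow2_ge_0 (c - 1/2)); nra).
  assert (HK1 : Kmin <= K) by (unfold K, Kmin; apply Rmult_le_compat; nra).
  assert (HK2 : K <= Kmax) by (unfold K, Kmax; replace ((a1+b1)/4) with (1/4 * (a1+b1)) by field; apply Rmult_le_compat; nra).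
  assert (HKm : 0 < Kmin) by (unfold Kmin; apply Rmult_lt_0_compat; nra).
  assert (EF : Fh h c * (c - xe) = N / K) by (unfold Fh, N, K; field; nra).
  rewrite EF. assert (0 <= N) by (assert (0 < c1) by (unfold c1; lra); pose proof (pow2_ge_0 (c - xe)); nra).
  unfold cm, CM. split.
  - unfold Rdiv. apply Rle_trans with (N * / Kmax).
    + replace (c1 * / Kmax * (c - xe) ^ 2) with (c1 * (c - xe) ^ 2 * / Kmax) by ring.
      apply Rmult_le_compat_r; [|lra]. left; apply Rinv_0_lt_compat; lra.
    + apply Rmult_le_compat_l; auto. apply Rinv_le_contravar; lra.
  - unfold Rdiv. apply Rle_trans with (N * / Kmin).
    + apply Rmult_le_compat_l; auto. apply Rinv_le_contravar; lra.
    + replace ((c1 + c2 * (L2 * / m1)) * / Kmin * (c - xe) ^ 2) with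
        ((c1 + c2 * (L2 * / m1)) * (c - xe) ^ 2 * / Kmin) by ring.
      apply Rmult_le_compat_r; [left; apply Rinv_0_lt_compat; lra|]. unfold Rdiv in N2. lra.
Qed.

Definition Psi h xe z := RInt (Fh h) xe z.

Lemma Psi_derive h xe z : Rabs (h - hs) <= eta -> Rabs (xe - xs) < 2 * ee -> Rabs (z - xs) < 2 * ee ->
  is_derive (Psi h xe) z (Fh h z).
Proof.
  intros Hh Hxe Hz.
  apply (is_derive_RInt (Fh h) (Psi h xe) xe z).
  - assert (Hd : 0 < 2 * ee - Rabs (z - xs)) by lra.
    exists (mkposreal _ Hd). intros y Hy.
    change (Rabs (y - z) < 2 * ee - Rabs (z - xs)) in Hy.
    unfold Psi. apply (RInt_correct (V := R_CompleteNormedModule)). apply (ex_RInt_continuous (V := R_CompleteNormedModule)).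
    intros w Hw. apply continuity_pt_filterlim. apply F_cont; auto.
    assert (Hyx : Rabs (y - xs) < 2 * ee).
    { replace (y - xs) with ((y - z) + (z - xs)) by ring.
      pose proof (Rabs_triang (y - z) (z - xs)). lra. }
    apply Rabs_def2 in Hyx. apply Rabs_def2 in Hxe.
    destruct (Rle_dec xe y).
    + rewrite Rmin_left in Hw by lra. rewrite Rmax_right in Hw by lra. apply Rabs_def1; lra.
    + rewrite Rmin_right in Hw by lra. rewrite Rmax_left in Hw by lra. apply Rabs_def1; lra.
  - apply continuity_pt_filterlim. apply F_cont; auto.
Qed.

Lemma Psi_xe h xe : Psi h xe xe = 0.
Proof. unfold Psi. rewrite RInt_point. reflexivity. Qed.

Lemma btw_U a b w : Rabs (a - xs) < 2 * ee -> Rabs (b - xs) < 2 * ee ->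
  Rmin a b <= w <= Rmax a b -> Rabs (w - xs) < 2 * ee.
Proof.
  intros Ha Hb Hw. apply Rabs_def2 in Ha. apply Rabs_def2 in Hb.
  destruct (Rle_dec a b).
  - rewrite Rmin_left in Hw by lra. rewrite Rmax_right in Hw by lra. apply Rabs_def1; lra.
  - rewrite Rmin_right in Hw by lra. rewrite Rmax_left in Hw by lra. apply Rabs_def1; lra.
Qed.

Lemma sign_trans A c xe z : A * (c - xe) >= 0 -> (c - xe) * (z - xe) >= 0 -> c <> xe -> A * (z - xe) >= 0.
Proof.
  intros H1 H2 H3. assert (0 < (c - xe) ^ 2) by (apply pow2_gt_0; lra).
  apply Rle_ge. apply Rmult_le_reg_r with ((c - xe) ^ 2); auto. rewrite Rmult_0_l.
  replace (A * (z - xe) * (c - xe) ^ 2) with ((A * (c - xe)) * ((c - xe) * (z - xe))) by ring.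
  apply Rmult_le_pos; lra.
Qed.

Lemma F_xe h xe : Gh h xe = 0 -> Fh h xe = 0.
Proof. intros HG. unfold Fh. rewrite HG. unfold Rdiv. ring. Qed.

Lemma btw_sign xe z c : Rmin xe z <= c <= Rmax xe z -> (c - xe) * (z - xe) >= 0.
Proof.
  intros Hc. destruct (Rle_dec xe z).
  - rewrite Rmin_left in Hc by lra. rewrite Rmax_right in Hc by lra. apply Rle_ge, Rmult_le_pos; lra.
  - rewrite Rmin_right in Hc by lra. rewrite Rmax_left in Hc by lra.
    replace ((c - xe) * (z - xe)) with ((xe - c) * (xe - z)) by ring. apply Rle_ge, Rmult_le_pos; lra.
Qed.

Lemma Psi_bounds h xe z : Rabs (h - hs) <= eta -> Rabs (xe - xs) < 2 * ee -> Gh h xe = 0 ->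
  Rabs (z - xs) < 2 * ee ->
  cm / 2 * (z - xe) ^ 2 <= Psi h xe z <= CM / 2 * (z - xe) ^ 2.
Proof.
  intros Hh Hxe HG Hz. split.
  - destruct (MVT_gen (fun w => Psi h xe w - cm / 2 * (w - xe) ^ 2) xe z
                     (fun w => Fh h w - cm * (w - xe))) as [c [Hc Hm]].
    + intros w Hw. apply (is_derive_minus (Psi h xe) (fun w => cm / 2 * (w - xe) ^ 2)).
      * apply Psi_derive; auto. apply (btw_U xe z); auto; lra.
      * auto_derive; auto. field.
    + intros w Hw. apply continuity_pt_minus.
      * apply derivable_continuous_pt. exists (Fh h w). apply is_derive_Reals.
        apply Psi_derive; auto. apply (btw_U xe z); auto.
      * apply derivable_continuous_pt. exists (cm * (w - xe)). apply is_derive_Reals.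
        auto_derive; auto. field.
    + rewrite Psi_xe in Hm. 
      assert (Hcz : Rabs (c - xs) < 2 * ee) by (apply (btw_U xe z); auto).
      pose proof (F_bounds h xe c Hh Hxe Hcz HG) as [B1 _].
      assert ((Fh h c - cm * (c - xe)) * (z - xe) >= 0).
      { destruct (Req_dec c xe) as [->|Hne].
        - rewrite F_xe; auto. lra.
        - apply (sign_trans _ c); auto. 2: apply btw_sign; auto. nra. }
      nra.
  - destruct (MVT_gen (fun w => CM / 2 * (w - xe) ^ 2 - Psi h xe w) xe z
                     (fun w => CM * (w - xe) - Fh h w)) as [c [Hc Hm]].
    + intros w Hw. apply (is_derive_minus (fun w => CM / 2 * (w - xe) ^ 2) (Psi h xe)).
      * auto_derive; auto. field.
      * apply Psi_derive; auto. apply (btw_U xe z); auto; lra.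
    + intros w Hw. apply continuity_pt_minus.
      * apply derivable_continuous_pt. exists (CM * (w - xe)). apply is_derive_Reals.
        auto_derive; auto. field.
      * apply derivable_continuous_pt. exists (Fh h w). apply is_derive_Reals.
        apply Psi_derive; auto. apply (btw_U xe z); auto.
    + rewrite Psi_xe in Hm.
      assert (Hcz : Rabs (c - xs) < 2 * ee) by (apply (btw_U xe z); auto).
      pose proof (F_bounds h xe c Hh Hxe Hcz HG) as [_ B2].
      assert ((CM * (c - xe) - Fh h c) * (z - xe) >= 0).
      { destruct (Req_dec c xe) as [->|Hne].
        - rewrite F_xe; auto. lra.
        - apply (sign_trans _ c); auto. 2: apply btw_sign; auto. nra. }
      nra.
Qed.

Let FF := PD_field a1 b1 a2 b2 th1 th2.
Definition Dr r := - ln (4 * r * (1 - r)).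

Lemma ode_unpack (x y r : R -> R) t : ode_at FF x y r t ->
  is_derive x t (x t * (1 - x t) * phi1 a1 b1 (y t) * (1 - 2 * r t)) /\
  is_derive y t (y t * (1 - y t) * phi2 a2 b2 (x t) * (1 - 2 * r t)) /\
  is_derive r t (r t * (1 - r t) * ((1 + th1) * x t + (1 + th2) * y t - 2)).
Proof.
  intros [H1 [H2 H3]]. unfold FF, PD_field in *. simpl in *.
  split; [|split]; apply is_derive_Reals; auto.
Qed.

Lemma rc_plus f g : right_cont0 f -> right_cont0 g -> right_cont0 (fun t => f t + g t).
Proof.
  intros Hf Hg eps He. destruct (Hf (eps/2) ltac:(lra)) as [d1 [Hd1 H1]].
  destruct (Hg (eps/2) ltac:(lra)) as [d2 [Hd2 H2]].
  exists (Rmin d1 d2). split; [apply Rmin_glb_lt; lra|].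
  intros t Ht. pose proof (Rmin_l d1 d2). pose proof (Rmin_r d1 d2).
  specialize (H1 t ltac:(lra)). specialize (H2 t ltac:(lra)).
  replace (f t + g t - (f 0 + g 0)) with ((f t - f 0) + (g t - g 0)) by ring.
  pose proof (Rabs_triang (f t - f 0) (g t - g 0)). lra.
Qed.

Lemma rc_opp f : right_cont0 f -> right_cont0 (fun t => - f t).
Proof.
  intros Hf eps He. destruct (Hf eps He) as [d [Hd H]]. exists d. split; auto.
  intros t Ht. replace (- f t - - f 0) with (- (f t - f 0)) by ring. rewrite Rabs_Ropp. auto.
Qed.

Definition inbox (x y r : R -> R) s :=
  Rabs (x s - xs) <= ee /\ Rabs (y s - ys) <= ee /\ Rabs (r s - 1/2) <= ee.

Lemma inbox_ranges x y r s : inbox x y r s ->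
  d0 <= x s <= 1 - d0 /\ d0 <= y s <= 1 - d0 /\ 1/4 <= r s <= 3/4 /\
  Rabs (x s - xs) < 2 * ee /\ ys - d0 < y s < ys + d0.
Proof.
  intros [H1 [H2 H3]]. destruct d0_facts as [Hd [Hx1 [Hx2 [Hy1 Hy2]]]].
  destruct ee_facts as [He [He2 _]].
  assert (d0 <= 1/4).
  { unfold d0. pose proof (Rmin_l (Rmin xs (1-xs)) (Rmin ys (1-ys))).
    pose proof (Rmin_l xs (1-xs)). pose proof (Rmin_r xs (1-xs)). lra. }
  apply Rabs_le_between in H1. apply Rabs_le_between in H2. apply Rabs_le_between in H3.
  repeat split; try lra. apply Rabs_def1; lra.
Qed.

Lemma H_const T x y r tau : is_sol_on FF T x y r -> 0 <= tau < T ->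
  (forall s, 0 <= s <= tau -> inbox x y r s) -> HH (x tau) (y tau) = HH (x 0) (y 0).
Proof.
  intros [Hode [Hrx [Hry Hrr]]] Htau Hbox.
  apply (const_deriv0 (fun s => HH (x s) (y s))); [lra| |].
  - intros s Hs. destruct (ode_unpack x y r s (Hode s ltac:(lra))) as [Dx [Dy _]].
    destruct (inbox_ranges x y r s (Hbox s ltac:(lra))) as [Rx [Ry _]].
    destruct d0_facts as [Hd _].
    unfold HH.
    eapply is_derive_ext. { intros t. reflexivity. }
    replace 0 with (scal (x s * (1 - x s) * phi1 a1 b1 (y s) * (1 - 2 * r s)) (a2 / x s + b2 / (1 - x s))
               - scal (y s * (1 - y s) * phi2 a2 b2 (x s) * (1 - 2 * r s)) (a1 / y s + b1 / (1 - y s))).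
    + apply (is_derive_minus (fun t => P2 (x t)) (fun t => P1 (y t))).
      * apply (is_derive_comp P2 x). apply Pg_derive; lra. auto.
      * apply (is_derive_comp P1 y). apply Pg_derive; lra. auto.
    + unfold scal; simpl; unfold mult; simpl. unfold phi1, phi2. field. lra.
  - unfold HH. apply (rc_plus (fun t => P2 (x t)) (fun t => - P1 (y t))).
    + apply rc_comp; auto. apply Pg_cont.
      destruct (inbox_ranges x y r 0 (Hbox 0 ltac:(lra))) as [Rx _]. destruct d0_facts as [Hd _]. lra.
    + apply rc_opp. apply rc_comp; auto. apply Pg_cont.
      destruct (inbox_ranges x y r 0 (Hbox 0 ltac:(lra))) as [_ [Ry _]]. destruct d0_facts as [Hd _]. lra.
Qed.

Lemma Dr_derive r0 : 0 < r0 < 1 -> is_derive Dr r0 (- (1 - 2 * r0) / (r0 * (1 - r0))).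
Proof.
  intros Hr. unfold Dr. auto_derive.
  - nra.
  - field. lra.
Qed.

Lemma Dr_cont r0 : 0 < r0 < 1 -> continuity_pt Dr r0.
Proof.
  intros Hr. apply derivable_continuous_pt. exists (- (1 - 2 * r0) / (r0 * (1 - r0))).
  apply is_derive_Reals. apply Dr_derive; auto.
Qed.

Lemma Y_traj T x y r s : is_sol_on FF T x y r -> 0 <= s < T ->
  (forall u, 0 <= u <= s -> inbox x y r u) -> Rabs (HH (x 0) (y 0) - hs) <= eta ->
  Yh (HH (x 0) (y 0)) (x s) = y s.
Proof.
  intros Hsol Hs Hbox Hh.
  destruct (inbox_ranges x y r s (Hbox s ltac:(lra))) as [Rx [Ry [Rr [Ux Uy]]]].
  apply Y_eq; auto. rewrite <- (H_const T x y r s); auto. unfold HH. fold P1 P2. ring.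
Qed.

Lemma E_const T x y r tau xe : is_sol_on FF T x y r -> 0 <= tau < T ->
  (forall s, 0 <= s <= tau -> inbox x y r s) -> Rabs (HH (x 0) (y 0) - hs) <= eta ->
  Rabs (xe - xs) < 2 * ee ->
  Dr (r tau) + Psi (HH (x 0) (y 0)) xe (x tau) = Dr (r 0) + Psi (HH (x 0) (y 0)) xe (x 0).
Proof.
  intros Hsol Htau Hbox Hh Hxe. set (h := HH (x 0) (y 0)) in *.
  pose proof Hsol as [Hode [Hrx [Hry Hrr]]].
  apply (const_deriv0 (fun s => Dr (r s) + Psi h xe (x s))); [lra| |].
  - intros s Hs. destruct (ode_unpack x y r s (Hode s ltac:(lra))) as [Dx [Dy Dr']].
    destruct (inbox_ranges x y r s (Hbox s ltac:(lra))) as [Rx [Ry [Rr [Ux Uy]]]].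
    destruct d0_facts as [Hd _].
    pose proof (Y_traj T x y r s Hsol ltac:(lra) ltac:(intros; apply Hbox; lra) Hh) as HY.
    fold h in HY.
    pose proof (phi1_bounds (y s) ltac:(lra)) as [Hp _].
    assert (0 < a1 * b1 / (a1 + b1)) by (apply Rdiv_lt_0_compat; nra).
    replace 0 with (scal (r s * (1 - r s) * ((1 + th1) * x s + (1 + th2) * y s - 2))
                         (- (1 - 2 * r s) / (r s * (1 - r s)))
                  + scal (x s * (1 - x s) * phi1 a1 b1 (y s) * (1 - 2 * r s)) (Fh h (x s))).
    + apply (is_derive_plus (fun t => Dr (r t)) (fun t => Psi h xe (x t))).
      * apply (is_derive_comp Dr r). apply Dr_derive; lra. auto.
      * apply (is_derive_comp (Psi h xe) x). apply Psi_derive; auto. auto.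
    + unfold scal; simpl; unfold mult; simpl. unfold Fh, Gh, gg. rewrite HY. unfold c1, c2.
      assert (0 < x s * (1 - x s)) by nra. assert (0 < r s * (1 - r s)) by nra.
      field. split; [lra|]. split; [lra|]. split; [lra|]. lra.
  - destruct (inbox_ranges x y r 0 (Hbox 0 ltac:(lra))) as [Rx [Ry [Rr [Ux Uy]]]].
    apply (rc_plus (fun t => Dr (r t)) (fun t => Psi h xe (x t))).
    + apply rc_comp; auto. apply Dr_cont. lra.
    + apply rc_comp; auto. apply derivable_continuous_pt. exists (Fh h (x 0)).
      apply is_derive_Reals. apply Psi_derive; auto.
Qed.

Lemma Dr_bounds r0 : Rabs (r0 - 1/2) <= 1/4 -> 4 * (r0 - 1/2) ^ 2 <= Dr r0 <= 8 * (r0 - 1/2) ^ 2.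
Proof.
  intros Hr. apply Rabs_le_between in Hr.
  assert (E : 4 * r0 * (1 - r0) = 1 - 4 * (r0 - 1/2) ^ 2) by field.
  set (u := 4 * (r0 - 1/2) ^ 2) in *.
  assert (Hu : 0 <= u <= 1/4). { unfold u. clear E. pose proof (pow2_ge_0 (r0-1/2)). split; [lra|]. assert ((r0-1/2)^2 <= 1/16) by (replace ((r0-1/2)^2) with ((r0-1/2)*(r0-1/2)) by ring; nra). lra. }
  unfold Dr. rewrite E. split.
  - pose proof (ln_le_sub1 (1 - u) ltac:(lra)). lra.
  - pose proof (ln_diff_hi 1 (1 - u) ltac:(lra) ltac:(lra)) as H. rewrite ln_1 in H.
    assert ((1 - (1 - u)) / (1 - u) <= 2 * u).
    { apply Rmult_le_reg_r with (1 - u); [lra|]. field_simplify; [nra|lra]. }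
    unfold u in *. lra.
Qed.

Definition K1 := (c1 + c2) / c1.
Definition K2 := 8 + CM / 2 * K1 ^ 2.
Definition Kx := 2 * K2 / cm.
Definition Kf := 3 * (Kx + K1 ^ 2 + 1) + 2 * ((L2 / m1) ^ 2 * (2 * (Kx + K1 ^ 2)) + 1) + K2 / 4.
Definition dmax := Rmin (eta / (L1 + L2)) ee.

Lemma Kpos : 0 < cm /\ 0 < CM /\ 0 < K1 /\ 0 < K2 /\ 0 < Kx /\ 0 < Kf.
Proof.
  destruct d0_facts as [Hd _].
  assert (0 < c1 /\ 0 < c2) by (unfold c1, c2; lra).
  assert (0 < Kmax) by (unfold Kmax; lra).
  assert (0 < Kmin) by (unfold Kmin; apply Rmult_lt_0_compat; [nra|apply Rdiv_lt_0_compat; nra]).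
  assert (0 < L2 / m1) by (unfold L2, m1, m2; apply Rdiv_lt_0_compat; [apply Rdiv_lt_0_compat|]; lra).
  assert (Hcm : 0 < cm) by (unfold cm; apply Rdiv_lt_0_compat; lra).
  assert (HCM : 0 < CM) by (unfold CM; apply Rdiv_lt_0_compat; nra).
  assert (HK1 : 0 < K1) by (unfold K1; apply Rdiv_lt_0_compat; lra).
  assert (HK2 : 0 < K2) by (unfold K2; pose proof (pow2_ge_0 K1); nra).
  assert (HKx : 0 < Kx) by (unfold Kx; apply Rdiv_lt_0_compat; lra).
  repeat split; auto. unfold Kf. pose proof (pow2_ge_0 K1). pose proof (pow2_ge_0 (L2/m1)). nra.
Qed.

Lemma traj_est T x y r tau del : is_sol_on FF T x y r -> 0 <= tau < T ->
  (forall s, 0 <= s <= tau -> inbox x y r s) -> 0 < del -> del <= dmax ->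
  Rabs (x 0 - xs) < del -> Rabs (y 0 - ys) < del -> Rabs (r 0 - 1/2) < del ->
  (x tau - xs) ^ 2 + (y tau - ys) ^ 2 + (r tau - 1/2) ^ 2 <= Kf * del ^ 2.
Proof.
  intros Hsol Htau Hbox Hdel Hdm Hx0 Hy0 Hr0.
  destruct d0_facts as [Hd _]. destruct ee_facts as [He [He2 _]].
  destruct Kpos as [Hcm [HCM [HK1 [HK2 [HKx HKf]]]]].
  assert (Hc12 : 0 < c1 /\ 0 < c2) by (unfold c1, c2; lra).
  assert (HL : 0 < L1 + L2) by (unfold L1, L2, m1, m2; assert (0 < /d0) by (apply Rinv_0_lt_compat; lra); unfold Rdiv; nra).
  assert (Hdm1 : del <= eta / (L1 + L2)) by (eapply Rle_trans; [apply Hdm| apply Rmin_l]).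
  assert (Hdm2 : del <= ee) by (eapply Rle_trans; [apply Hdm| apply Rmin_r]).
  destruct (inbox_ranges x y r 0 (Hbox 0 ltac:(lra))) as [Rx0 [Ry0 [Rr0 [Ux0 Uy0]]]].
  destruct (inbox_ranges x y r tau (Hbox tau ltac:(lra))) as [Rxt [Ryt [Rrt [Uxt Uyt]]]].
  set (h := HH (x 0) (y 0)).
  assert (Hh : Rabs (h - hs) <= eta).
  { unfold h, hs, HH. fold P1 P2.
    replace (P2 (x 0) - P1 (y 0) - (P2 xs - P1 ys)) with ((P2 (x 0) - P2 xs) - (P1 (y 0) - P1 ys)) by ring.
    assert (Rxs : d0 <= xs <= 1 - d0) by (destruct d0_facts as [_ [? [? _]]]; lra).
    assert (Rys : d0 <= ys <= 1 - d0) by (destruct d0_facts as [_ [_ [_ [? ?]]]]; lra).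
    pose proof (P2_abs xs (x 0) Rxs Rx0). pose proof (P1_abs ys (y 0) Rys Ry0).
    pose proof (Rabs_triang (P2 (x 0) - P2 xs) (- (P1 (y 0) - P1 ys))). rewrite Rabs_Ropp in H1.
    replace (P2 (x 0) - P2 xs + - (P1 (y 0) - P1 ys)) with ((P2 (x 0) - P2 xs) - (P1 (y 0) - P1 ys)) in H1 by ring.
    assert (L2 * Rabs (x 0 - xs) <= L2 * del) by (apply Rmult_le_compat_l; [unfold L2, m2; apply Rlt_le, Rdiv_lt_0_compat; lra|lra]).
    assert (L1 * Rabs (y 0 - ys) <= L1 * del) by (apply Rmult_le_compat_l; [unfold L1, m1; apply Rlt_le, Rdiv_lt_0_compat; lra|lra]).
    assert ((L1 + L2) * del <= eta).
    { apply Rmult_le_compat_l with (r := L1 + L2) in Hdm1; [|lra].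
      replace ((L1 + L2) * (eta / (L1 + L2))) with eta in Hdm1 by (field; lra). lra. }
    lra. }
  destruct (xe_exists h Hh) as [xe [Hxe HG]].
  assert (Uxe : Rabs (xe - xs) < 2 * ee) by (apply Rabs_def1; lra).
  pose proof (E_const T x y r tau xe Hsol Htau Hbox Hh Uxe) as EC. fold h in EC.
  pose proof (Psi_bounds h xe (x tau) Hh Uxe HG Uxt) as [Pt1 _].
  pose proof (Psi_bounds h xe (x 0) Hh Uxe HG Ux0) as [_ P02].
  assert (Rabs (r 0 - 1/2) <= 1/4) by (apply Rabs_le_between; lra).
  assert (Rabs (r tau - 1/2) <= 1/4) by (apply Rabs_le_between; lra).
  pose proof (Dr_bounds (r 0) H) as [_ D02]. pose proof (Dr_bounds (r tau) H0) as [Dt1 _].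
  assert (HY0 : Yh h (x 0) = y 0) by (apply (Y_traj T x y r 0); [auto|lra|intros; apply Hbox; lra|auto]).
  assert (HYt : Yh h (x tau) = y tau) by (apply (Y_traj T x y r tau); [auto|lra|intros; apply Hbox; lra|auto]).
  assert (Hx0e : (x 0 - xe) ^ 2 <= K1 ^ 2 * del ^ 2).
  { pose proof (G_bounds h xe (x 0) Hh Uxe Ux0 HG) as [G1 _].
    assert (EG : Gh h (x 0) = c1 * (x 0 - xs) + c2 * (y 0 - ys)).
    { unfold Gh, gg. rewrite HY0. unfold c1, c2. lra. }
    rewrite EG in G1.
    assert (Hg : Rabs (c1 * (x 0 - xs) + c2 * (y 0 - ys)) <= (c1 + c2) * del).
    { pose proof (Rabs_triang (c1 * (x 0 - xs)) (c2 * (y 0 - ys))).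
      rewrite !Rabs_mult in H1. rewrite (Rabs_right c1), (Rabs_right c2) in H1 by lra.
      assert (c1 * Rabs (x 0 - xs) <= c1 * del) by (apply Rmult_le_compat_l; lra).
      assert (c2 * Rabs (y 0 - ys) <= c2 * del) by (apply Rmult_le_compat_l; lra). lra. }
    set (g0 := c1 * (x 0 - xs) + c2 * (y 0 - ys)) in *.
    assert (G2 : c1 * (x 0 - xe) ^ 2 <= Rabs g0 * Rabs (x 0 - xe)).
    { rewrite <- Rabs_mult. eapply Rle_trans; [exact G1| apply Rle_abs]. }
    rewrite <- pow2_abs in G2.
    set (a := Rabs (x 0 - xe)) in *.
    assert (Ha0 : 0 <= a) by apply Rabs_pos.
    assert (Ha : a <= K1 * del).
    { destruct (Req_dec a 0) as [Hz|Hz]. { rewrite Hz. nra. }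
      assert (c1 * a <= (c1 + c2) * del).
      { apply Rmult_le_reg_r with a; [lra|]. nra. }
      unfold K1. apply Rmult_le_reg_l with c1; [lra|].
      replace (c1 * ((c1 + c2) / c1 * del)) with ((c1 + c2) * del) by (field; lra). lra. }
    rewrite <- pow2_abs. fold a. replace (K1 ^ 2 * del ^ 2) with ((K1 * del) ^ 2) by ring.
    apply pow_incr. lra. }
  assert (Sq : forall a, Rabs a < del -> a ^ 2 <= del ^ 2).
  { intros a Ha. rewrite <- pow2_abs. apply pow_incr. split; [apply Rabs_pos|lra]. }
  pose proof (Sq _ Hx0) as Sx0. pose proof (Sq _ Hy0) as Sy0. pose proof (Sq _ Hr0) as Sr0.
  assert (S1 : Dr (r 0) + Psi h xe (x 0) <= K2 * del ^ 2).
  { assert (CM / 2 * (x 0 - xe) ^ 2 <= CM / 2 * (K1 ^ 2 * del ^ 2)) by (apply Rmult_le_compat_l; lra).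
    unfold K2. nra. }
  set (A := (x tau - xe) ^ 2). set (B := (x 0 - xe) ^ 2).
  assert (HA0 : 0 <= A) by apply pow2_ge_0.
  assert (Hrho : 0 <= (r tau - 1/2) ^ 2) by apply pow2_ge_0.
  assert (S2a : cm / 2 * A <= K2 * del ^ 2) by (unfold A in *; lra).
  assert (S2 : A <= Kx * del ^ 2).
  { unfold Kx. apply Rmult_le_reg_l with (cm / 2); [lra|].
    replace (cm / 2 * (2 * K2 / cm * del ^ 2)) with (K2 * del ^ 2) by (field; lra). lra. }
  assert (S2r : (r tau - 1/2) ^ 2 <= K2 / 4 * del ^ 2).
  { assert (0 <= Psi h xe (x tau)) by (unfold A in *; nra). lra. }
  assert (S3 : (x tau - xs) ^ 2 <= 3 * (Kx + K1 ^ 2 + 1) * del ^ 2).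
  { assert ((x tau - xs) ^ 2 <= 3 * (A + B + (x 0 - xs) ^ 2)).
    { unfold A, B. pose proof (pow2_ge_0 ((x tau - xe) - (xe - x 0))).
      pose proof (pow2_ge_0 ((x tau - xe) - (x 0 - xs))). pose proof (pow2_ge_0 ((xe - x 0) - (x 0 - xs))).
      nra. }
    fold B in Hx0e. nra. }
  assert (S4 : (x tau - x 0) ^ 2 <= 2 * (Kx + K1 ^ 2) * del ^ 2).
  { assert ((x tau - x 0) ^ 2 <= 2 * (A + B)).
    { unfold A, B. pose proof (pow2_ge_0 ((x tau - xe) + (x 0 - xe))). nra. }
    fold B in Hx0e. nra. }
  assert (S5 : (y tau - y 0) ^ 2 <= (L2 / m1) ^ 2 * (x tau - x 0) ^ 2).
  { rewrite <- HY0, <- HYt. assert (0 < L2 / m1) by (unfold L2, m1, m2; apply Rdiv_lt_0_compat; [apply Rdiv_lt_0_compat|]; lra).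
    destruct (Rle_dec (x 0) (x tau)).
    - pose proof (Y_lip h (x 0) (x tau) Hh Ux0 Uxt r0) as [Y1 Y2].
      replace ((L2 / m1) ^ 2 * (x tau - x 0) ^ 2) with ((L2 / m1 * (x tau - x 0)) ^ 2) by ring.
      apply pow_incr. lra.
    - pose proof (Y_lip h (x tau) (x 0) Hh Uxt Ux0 ltac:(lra)) as [Y1 Y2].
      replace ((Yh h (x tau) - Yh h (x 0)) ^ 2) with ((Yh h (x 0) - Yh h (x tau)) ^ 2) by ring.
      replace ((L2 / m1) ^ 2 * (x tau - x 0) ^ 2) with ((L2 / m1 * (x 0 - x tau)) ^ 2) by ring.
      apply pow_incr. lra. }
  assert (S6 : (y tau - ys) ^ 2 <= 2 * ((L2 / m1) ^ 2 * (2 * (Kx + K1 ^ 2)) + 1) * del ^ 2).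
  { assert ((y tau - ys) ^ 2 <= 2 * ((y tau - y 0) ^ 2 + (y 0 - ys) ^ 2)).
    { pose proof (pow2_ge_0 ((y tau - y 0) - (y 0 - ys))). nra. }
    assert ((L2 / m1) ^ 2 * (x tau - x 0) ^ 2 <= (L2 / m1) ^ 2 * (2 * (Kx + K1 ^ 2) * del ^ 2))
      by (apply Rmult_le_compat_l; [apply pow2_ge_0|lra]).
    nra. }
  unfold Kf. nra.
Qed.

Lemma sq_abs_le a b : 0 <= b -> a ^ 2 <= b ^ 2 -> Rabs a <= b.
Proof.
  intros Hb H. rewrite <- pow2_abs in H. destruct (Rle_dec (Rabs a) b); auto.
  assert (b ^ 2 < Rabs a ^ 2) by (pose proof (Rabs_pos a); nra). lra.
Qed.

Lemma sq_abs_lt a b : 0 <= b -> a ^ 2 < b ^ 2 -> Rabs a < b.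
Proof.
  intros Hb H. rewrite <- pow2_abs in H. destruct (Rlt_dec (Rabs a) b); auto.
  assert (b ^ 2 <= Rabs a ^ 2) by (apply pow_incr; lra). lra.
Qed.

Lemma dist3_eq a b c : dist3 (a, b, c) (xs, ys, 1/2) = sqrt ((a - xs) ^ 2 + (b - ys) ^ 2 + (c - 1/2) ^ 2).
Proof. reflexivity. Qed.

Lemma stable : lyapunov_stable FF (xs, ys, 1/2).
Proof.
  intros eps Heps.
  destruct ee_facts as [He _]. destruct Kpos as [_ [_ [_ [_ [_ HKf]]]]].
  assert (Hdmax : 0 < dmax).
  { destruct eta_facts as [Het _]. destruct d0_facts as [Hd _].
    assert (0 < L1 + L2) by (unfold L1, L2, m1, m2; assert (0 < /d0) by (apply Rinv_0_lt_compat; lra); unfold Rdiv; nra).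
    unfold dmax. apply Rmin_glb_lt; [apply Rdiv_lt_0_compat|]; lra. }
  set (e1 := Rmin eps ee).
  assert (He1 : 0 < e1) by (unfold e1; apply Rmin_glb_lt; lra).
  assert (He1a : e1 <= eps) by apply Rmin_l. assert (He1b : e1 <= ee) by apply Rmin_r.
  set (del := Rmin dmax (e1 / (Kf + 1))).
  assert (Hdel : 0 < del) by (unfold del; apply Rmin_glb_lt; [lra| apply Rdiv_lt_0_compat; lra]).
  assert (Hdel1 : del <= dmax) by apply Rmin_l.
  assert (Hdel2 : del <= e1 / (Kf + 1)) by apply Rmin_r.
  assert (Hdel3 : del <= e1).
  { eapply Rle_trans; [exact Hdel2|]. apply Rmult_le_reg_r with (Kf + 1); [lra|].
    unfold Rdiv. rewrite Rmult_assoc, Rinv_l by lra. nra. }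
  assert (Hkey : Kf * del ^ 2 < e1 ^ 2).
  { assert (del * (Kf + 1) <= e1).
    { apply Rmult_le_compat_r with (r := Kf + 1) in Hdel2; [|lra].
      unfold Rdiv in Hdel2. rewrite Rmult_assoc, Rinv_l, Rmult_1_r in Hdel2 by lra. lra. }
    assert ((del * (Kf + 1)) ^ 2 <= e1 ^ 2) by (apply pow_incr; nra).
    assert (0 < del ^ 2) by (apply pow_lt; lra). nra. }
  exists del. split; auto.
  intros T x y r Hsol Hd0 t Ht.
  rewrite dist3_eq in Hd0 |- *.
  set (f := fun s => (x s - xs) ^ 2 + (y s - ys) ^ 2 + (r s - 1/2) ^ 2).
  change (sqrt (f 0) < del) in Hd0. change (sqrt (f t) < eps).
  assert (Hf0 : f 0 < del ^ 2).
  { assert (0 <= f 0) by (unfold f; pose proof (pow2_ge_0 (x 0 - xs)); pose proof (pow2_ge_0 (y 0 - ys)); pose proof (pow2_ge_0 (r 0 - 1/2)); lra).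
    rewrite <- (sqrt_sqrt (f 0)) by auto. pose proof (sqrt_pos (f 0)). nra. }
  assert (Hc0 : forall s, 0 <= f s) by (intros s; unfold f; pose proof (pow2_ge_0 (x s - xs)); pose proof (pow2_ge_0 (y s - ys)); pose proof (pow2_ge_0 (r s - 1/2)); lra).
  assert (Hx0 : Rabs (x 0 - xs) < del).
  { apply sq_abs_lt; [lra|]. unfold f in Hf0. pose proof (pow2_ge_0 (y 0 - ys)); pose proof (pow2_ge_0 (r 0 - 1/2)). lra. }
  assert (Hy0 : Rabs (y 0 - ys) < del).
  { apply sq_abs_lt; [lra|]. unfold f in Hf0. pose proof (pow2_ge_0 (x 0 - xs)); pose proof (pow2_ge_0 (r 0 - 1/2)). lra. }
  assert (Hr0 : Rabs (r 0 - 1/2) < del).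
  { apply sq_abs_lt; [lra|]. unfold f in Hf0. pose proof (pow2_ge_0 (y 0 - ys)); pose proof (pow2_ge_0 (x 0 - xs)). lra. }
  assert (Hmain : f t < e1 ^ 2).
  { pose proof Hsol as [Hode [Hrx [Hry Hrr]]].
    apply (cont_induction T (e1 ^ 2) f); auto.
    - intros s Hs. destruct (ode_unpack x y r s (Hode s Hs)) as [Dx [Dy Dr']].
      apply derivable_continuous_pt, ex_derive_Reals_0. unfold f.
      auto_derive. split; [eexists; exact Dx|split; [eexists; exact Dy|split; [eexists; exact Dr'|exact I]]].
    - unfold f. apply (rc_plus (fun s => (x s - xs) ^ 2 + (y s - ys) ^ 2) (fun s => (r s - 1/2) ^ 2)).
      apply (rc_plus (fun s => (x s - xs) ^ 2) (fun s => (y s - ys) ^ 2)).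
      + apply (rc_comp (fun z => (z - xs) ^ 2) x); auto. apply derivable_continuous_pt. reg.
      + apply (rc_comp (fun z => (z - ys) ^ 2) y); auto. apply derivable_continuous_pt. reg.
      + apply (rc_comp (fun z => (z - 1/2) ^ 2) r); auto. apply derivable_continuous_pt. reg.
    - assert (del ^ 2 <= e1 ^ 2) by (apply pow_incr; lra). lra.
    - intros tau Htau Hb.
      assert (Hbox : forall s, 0 <= s <= tau -> inbox x y r s).
      { intros s Hs. specialize (Hb s Hs). unfold f in Hb.
        pose proof (pow2_ge_0 (x s - xs)); pose proof (pow2_ge_0 (y s - ys)); pose proof (pow2_ge_0 (r s - 1/2)).
        unfold inbox. split; [|split]; (apply Rle_trans with e1; [apply sq_abs_le; lra|exact He1b]). }
      pose proof (traj_est T x y r tau del Hsol Htau Hbox Hdel Hdel1 Hx0 Hy0 Hr0). unfold f. lra. }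
  assert (sqrt (f t) < e1).
  { rewrite <- (sqrt_pow2 e1) by lra. apply sqrt_lt_1_alt. split; auto. }
  lra.
Qed.

Lemma not_attr : ~ attractive FF (xs, ys, 1/2).
Proof.
  intros [eta0 [Heta0 Hat]].
  assert (Hc : 0 < c1 /\ 0 < c2) by (unfold c1, c2; lra).
  set (k := eta0 / (2 * (c1 + c2))).
  assert (Hk : 0 < k) by (unfold k; apply Rdiv_lt_0_compat; lra).
  set (D := sqrt ((xs + c2 * k - xs) ^ 2 + (ys - c1 * k - ys) ^ 2 + (1/2 - 1/2) ^ 2)).
  assert (HD1 : 0 < D).
  { unfold D. apply sqrt_lt_R0. assert (0 < (c2 * k) ^ 2) by (apply pow_lt; nra).
    replace (xs + c2 * k - xs) with (c2 * k) by ring. pose proof (pow2_ge_0 (ys - c1 * k - ys)).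
    pose proof (pow2_ge_0 (1/2 - 1/2)). lra. }
  assert (HD2 : D < eta0).
  { unfold D. replace ((xs + c2 * k - xs) ^ 2 + (ys - c1 * k - ys) ^ 2 + (1/2 - 1/2) ^ 2)
      with ((c2 * k) ^ 2 + (c1 * k) ^ 2) by field.
    apply Rle_lt_trans with (sqrt (((c1 + c2) * k) ^ 2)).
    - apply sqrt_le_1_alt. assert (0 <= (c1 * k) * (c2 * k)) by (apply Rmult_le_pos; nra). nra.
    - rewrite sqrt_pow2 by nra. unfold k. replace ((c1 + c2) * (eta0 / (2 * (c1 + c2)))) with (eta0 / 2) by (field; lra). lra. }
  assert (Hsol : is_global_sol FF (fun _ => xs + c2 * k) (fun _ => ys - c1 * k) (fun _ => 1/2)).
  { split; [|split; [|split]].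
    - intros t Ht. unfold ode_at, FF, PD_field. simpl.
      split; [|split].
      + match goal with |- derivable_pt_lim _ _ ?v => replace v with 0 by field end.
        apply derivable_pt_lim_const.
      + match goal with |- derivable_pt_lim _ _ ?v => replace v with 0 by field end.
        apply derivable_pt_lim_const.
      + match goal with |- derivable_pt_lim _ _ ?v => replace v with 0 end.
        apply derivable_pt_lim_const. unfold c1, c2 in *. nra.
    - intros e He. exists 1. split; [lra|]. intros. rewrite Rminus_diag, Rabs_R0. lra.
    - intros e He. exists 1. split; [lra|]. intros. rewrite Rminus_diag, Rabs_R0. lra.
    - intros e He. exists 1. split; [lra|]. intros. rewrite Rminus_diag, Rabs_R0. lra. }
  specialize (Hat _ _ _ Hsol). rewrite dist3_eq in Hat. fold D in Hat.
  destruct (Hat HD2 D HD1) as [T0 HT0]. specialize (HT0 T0 ltac:(lra)).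
  rewrite dist3_eq in HT0. fold D in HT0. lra.
Qed.
End Main.

Theorem corollary1 (PS1 TR1 PS2 TR2 th1 th2 xs ys : R) :
  PS1 > 0 -> TR1 > 0 -> PS2 > 0 -> TR2 > 0 -> th1 > 0 -> th2 > 0 ->
  0 < xs < 1 -> 0 < ys < 1 ->
  (1 + th1) * xs + (1 + th2) * ys = 2 ->
  neutrally_stable (PD_field PS1 TR1 PS2 TR2 th1 th2) (xs, ys, 1 / 2).
Proof.
  intros. split.
  - apply stable; auto.
  - intros [_ Ha]. apply (not_attr PS1 TR1 PS2 TR2 th1 th2 xs ys); auto.
Qed.
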